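(* Every countably infinite line graph $G$ admits a majority $2$-vertex-coloring, i.e. there is a partition $V(G)=V_1\cup V_2$ such that for each $i\in\{1,2\}$ and each $v\in V_i$, $|N(v)\cap V_i|\le |N(v)\setminus V_i|$ (as cardinalities).
   Context: $N(v)$ denotes the set of neighbors of $v$ in $G$. A line graph is the line graph $L(H)$ of some graph $H$: its vertices are the edges of $H$, two being adjacent iff they share an endvertex. *)

(* Defs.v *)
From Stdlib Require Import Classical.

Definition simple_graph {V : Type} (adj : V -> V -> Prop) : Prop :=
  (forall u v, adj u v -> adj v u) /\ (forall v, ~ adj v v).

Definition countably_infinite (V : Type) : Prop :=
  exists f : nat -> V, (forall m n, f m = f n -> m = n) /\ (forall v, exists n, f n = v).

Definition nbhd {V : Type} (adj : V -> V -> Prop) (v : V) : V -> Prop := adj v.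

Definition card_le {V : Type} (A B : V -> Prop) : Prop :=
  exists f : {x | A x} -> {x | B x}, forall x y, f x = f y -> x = y.

Definition same_edge {W : Type} (e f : W * W) : Prop :=
  (fst e = fst f /\ snd e = snd f) \/ (fst e = snd f /\ snd e = fst f).

Definition share_end {W : Type} (e f : W * W) : Prop :=
  fst e = fst f \/ fst e = snd f \/ snd e = fst f \/ snd e = snd f.

(* adj is (isomorphic to) the line graph L(H) of some simple graph H = (W, adjH):
   [ends] is a bijection from V onto the edge set of H (edges as unordered pairs),
   and two distinct vertices are adjacent iff the corresponding edges share an
   endvertex. *)
Definition is_line_graph {V : Type} (adj : V -> V -> Prop) : Prop :=
  exists (W : Type) (adjH : W -> W -> Prop) (ends : V -> W * W),
    simple_graph adjH /\
    (forall v, adjH (fst (ends v)) (snd (ends v))) /\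
    (forall v w, same_edge (ends v) (ends w) -> v = w) /\
    (forall a b, adjH a b -> exists v, same_edge (ends v) (a, b)) /\
    (forall v w, adj v w <-> (v <> w /\ share_end (ends v) (ends w))).

(* Majority 2-vertex-colouring: partition V = V_1 ∪ V_2 given by c : V -> bool
   (V_1 = c^-1(true), V_2 = c^-1(false)); every v in V_i has
   |N(v) ∩ V_i| <= |N(v) \ V_i|. *)
Definition majority_2_colouring {V : Type} (adj : V -> V -> Prop) (c : V -> bool) : Prop :=
  forall v : V,
    card_le (fun w => nbhd adj v w /\ c w = c v)
            (fun w => nbhd adj v w /\ c w <> c v).

(* Main.v *)
Require Import Defs.
From Stdlib Require Import Classical ClassicalEpsilon ProofIrrelevance Lia Arith PeanoNat.

Definition ind (P : Prop) : nat := if excluded_middle_informative P then 1 else 0.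

Lemma ind_iff P Q : (P <-> Q) -> ind P = ind Q.
Proof. intros H; unfold ind; destruct (excluded_middle_informative P), (excluded_middle_informative Q); tauto. Qed.
Lemma ind_true (P : Prop) : P -> ind P = 1.
Proof. intros H; unfold ind; destruct (excluded_middle_informative P); tauto. Qed.
Lemma ind_false (P : Prop) : ~ P -> ind P = 0.
Proof. intros H; unfold ind; destruct (excluded_middle_informative P); tauto. Qed.
Lemma ind_pos (P : Prop) : 0 < ind P -> P.
Proof. unfold ind; destruct (excluded_middle_informative P); intros; [auto|lia]. Qed.

Fixpoint sum (N : nat) (f : nat -> nat) : nat :=
  match N with 0 => 0 | S N' => sum N' f + f N' end.

Lemma sum_ext N f g : (forall i, i < N -> f i = g i) -> sum N f = sum N g.
Proof. induction N; simpl; intros H; auto. rewrite IHN by (intros; apply H; lia). rewrite H by lia. auto. Qed.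
Lemma sum_plus N f g : sum N (fun i => f i + g i) = sum N f + sum N g.
Proof. induction N; simpl; auto. rewrite IHN; lia. Qed.
Lemma sum_zero N f : (forall i, i < N -> f i = 0) -> sum N f = 0.
Proof. induction N; simpl; intros H; auto. rewrite IHN by (intros; apply H; lia). rewrite H by lia. auto. Qed.
Lemma sum_single N f n : n < N -> (forall i, i <> n -> f i = 0) -> sum N f = f n.
Proof.
  induction N; simpl; intros Hn H; [lia|].
  destruct (Nat.eq_dec n N) as [->|Hne].
  - rewrite (sum_zero N f); [lia|]. intros i Hi; apply H; lia.
  - rewrite IHN; [|lia|auto]. rewrite (H N) by auto. lia.
Qed.
Lemma sum_mono N M f : N <= M -> sum N f <= sum M f.
Proof. induction 1; simpl; lia. Qed.
Lemma sum_elem N f n : n < N -> f n <= sum N f.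
Proof. intros Hn. pose proof (sum_mono (S n) N f Hn) as H1. simpl in H1. lia. Qed.
Lemma sum_trunc N M f : N <= M -> (forall i, N <= i -> f i = 0) -> sum M f = sum N f.
Proof. induction 1 as [|M Hle IH]; simpl; intros Hz; auto. rewrite Hz by lia. rewrite IH by auto. lia. Qed.

Lemma min_exists {X} (P : X -> Prop) (g : X -> nat) :
  (exists x, P x) -> exists x, P x /\ forall y, P y -> g x <= g y.
Proof.
  intros [x Hx].
  assert (H : forall n x, g x <= n -> P x -> exists x, P x /\ forall y, P y -> g x <= g y).
  { induction n; intros z Hz Pz.
    - exists z; split; auto; intros; lia.
    - destruct (classic (exists y, P y /\ g y < g z)) as [[y [Py Hy]]|Hno].
      + apply (IHn y); auto; lia.
      + exists z; split; auto. intros y Py. apply NNPP; intro Hc; apply Hno; exists y; split; auto; lia. }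
  apply (H (g x) x); auto.
Qed.

Definition agree (c s : nat -> bool) n := forall i, i < n -> c i = s i.
Definition upd (s : nat -> bool) n (b : bool) := fun i => if Nat.eq_dec i n then b else s i.

Lemma compactness (P : nat -> (nat -> bool) -> Prop) (b : nat -> nat) :
  (forall k c c', agree c c' (b k) -> P k c -> P k c') ->
  (forall K, exists c, forall k, k < K -> P k c) ->
  exists c, forall k, P k c.
Proof.
  intros Hloc Hfin.
  set (good := fun n s => forall K, exists c, agree c s n /\ forall k, k < K -> P k c).
  set (f := fix f n := match n with 0 => fun _ : nat => false | S n' =>
       if excluded_middle_informative (good (S n') (upd (f n') n' true)) then upd (f n') n' true
       else upd (f n') n' false end).
  assert (Hg : forall n, good n (f n)).
  { induction n.
    - intros K. destruct (Hfin K) as [c Hc]. exists c; split; auto. intros i Hi; lia.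
    - simpl. destruct (excluded_middle_informative (good (S n) (upd (f n) n true))) as [Ht|Ht]; auto.
      intros K. apply NNPP; intro HK. apply Ht. intros K'.
      destruct (IHn (max K K')) as [c [Hac Hc]].
      destruct (Bool.bool_dec (c n) true) as [Hcn|Hcn].
      + exists c; split.
        * intros i Hi; unfold upd; destruct (Nat.eq_dec i n); [subst; auto| apply Hac; lia].
        * intros; apply Hc; lia.
      + exfalso; apply HK. exists c; split.
        * intros i Hi; unfold upd; destruct (Nat.eq_dec i n); [subst; destruct (c n); congruence| apply Hac; lia].
        * intros; apply Hc; lia. }
  assert (Hst : forall n m i, i < n -> n <= m -> f m i = f n i).
  { intros n m i Hi Hm; induction Hm; auto.
    simpl. destruct (excluded_middle_informative _); unfold upd; destruct (Nat.eq_dec i m); try lia; auto. }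
  exists (fun i => f (S i) i).
  intros k. destruct (Hg (b k) (S k)) as [c [Hac Hc]].
  apply (Hloc k c). 2: apply Hc; lia.
  intros i Hi. rewrite Hac by auto. apply Hst; lia.
Qed.

Lemma sig_eq {A} (P : A -> Prop) (x y : {a | P a}) : proj1_sig x = proj1_sig y -> x = y.
Proof. destruct x, y; simpl; intros ->. f_equal; apply proof_irrelevance. Qed.

Lemma rank_exists (Q : nat -> Prop) N i : i < sum N (fun j => ind (Q j)) ->
  exists j, j < N /\ Q j /\ sum j (fun l => ind (Q l)) = i.
Proof.
  induction N; simpl; intros H; [lia|].
  destruct (le_lt_dec (sum N (fun j => ind (Q j))) i).
  - exists N. assert (0 < ind (Q N)) by lia. split; [lia|split; [apply ind_pos; auto|]].
    unfold ind in *; destruct (excluded_middle_informative (Q N)); lia.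
  - destruct (IHN l) as [j [? [? ?]]]. exists j; repeat split; auto; lia.
Qed.

Lemma rank_inj (P : nat -> Prop) m1 m2 : P m1 -> P m2 ->
  sum m1 (fun j => ind (P j)) = sum m2 (fun j => ind (P j)) -> m1 = m2.
Proof.
  intros H1 H2 He. destruct (lt_eq_lt_dec m1 m2) as [[Hl|]|Hl]; auto; exfalso.
  - pose proof (sum_mono (S m1) m2 (fun j => ind (P j)) Hl). simpl in H.
    rewrite (ind_true _ H1) in H. lia.
  - pose proof (sum_mono (S m2) m1 (fun j => ind (P j)) Hl). simpl in H.
    rewrite (ind_true _ H2) in H. lia.
Qed.

Lemma inj_fin (P Q : nat -> Prop) N : (forall m, P m -> m < N) ->
  sum N (fun j => ind (P j)) <= sum N (fun j => ind (Q j)) ->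
  exists phi : {m | P m} -> {m | Q m}, forall x y, phi x = phi y -> x = y.
Proof.
  intros HP Hle.
  assert (Hex : forall x : {m | P m}, exists j, Q j /\ sum j (fun l => ind (Q l)) = sum (proj1_sig x) (fun l => ind (P l))).
  { intros [m Pm]; simpl.
    destruct (rank_exists Q N (sum m (fun l => ind (P l)))) as [j [_ [Qj Hj]]].
    - pose proof (HP m Pm). pose proof (sum_mono (S m) N (fun j => ind (P j)) H). simpl in H0.
      rewrite (ind_true _ Pm) in H0. lia.
    - exists j; auto. }
  exists (fun x => exist _ (proj1_sig (constructive_indefinite_description _ (Hex x)))
                          (proj1 (proj2_sig (constructive_indefinite_description _ (Hex x))))).
  intros x y Hxy. apply sig_eq.
  apply (f_equal (@proj1_sig _ _)) in Hxy. simpl in Hxy.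
  destruct (constructive_indefinite_description _ (Hex x)) as [jx [Qx Hx]].
  destruct (constructive_indefinite_description _ (Hex y)) as [jy [Qy Hy]]. simpl in Hxy. subst jy.
  apply (rank_inj P); [exact (proj2_sig x)|exact (proj2_sig y)|congruence].
Qed.

Lemma inj_inf (P Q : nat -> Prop) : (forall N, exists m, N <= m /\ Q m) ->
  exists phi : {m | P m} -> {m | Q m}, forall x y, phi x = phi y -> x = y.
Proof.
  intros HQ.
  set (pk := fun N => proj1_sig (constructive_indefinite_description _ (HQ N))).
  assert (Hpk : forall N, N <= pk N /\ Q (pk N)).
  { intros N; unfold pk; destruct (constructive_indefinite_description _ (HQ N)); auto. }
  set (g := fix g k := match k with 0 => pk 0 | S k' => pk (S (g k')) end).
  assert (Hg : forall k, Q (g k)). { destruct k; simpl; apply Hpk. }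
  assert (Hmono : forall k l, k < l -> g k < g l).
  { intros k l H; induction H; simpl.
    - pose proof (Hpk (S (g k))); lia.
    - pose proof (Hpk (S (g m))); lia. }
  exists (fun x => exist _ (g (proj1_sig x)) (Hg _)).
  intros x y Hxy. apply (f_equal (@proj1_sig _ _)) in Hxy; simpl in Hxy.
  apply sig_eq. destruct (lt_eq_lt_dec (proj1_sig x) (proj1_sig y)) as [[Hl|]|Hl]; auto;
  [pose proof (Hmono _ _ Hl)|pose proof (Hmono _ _ Hl)]; lia.
Qed.

Definition inc {W} (en : nat -> W * W) (x : W) m := fst (en m) = x \/ snd (en m) = x.
Definition inf {W} (en : nat -> W * W) (x : W) := forall N, exists m, N <= m /\ inc en x m.
Definition fin {W} (en : nat -> W * W) (x : W) := exists N, forall m, inc en x m -> m < N.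
Definition fin_ends {W} (en : nat -> W * W) n := fin en (fst (en n)) /\ fin en (snd (en n)).

Lemma inf_not_fin {W} en (x : W) : inf en x -> ~ fin en x.
Proof. intros Hi [N HN]. destruct (Hi N) as [m [Hm Hx]]. specialize (HN m Hx); lia. Qed.
Lemma not_fin_inf {W} en (x : W) : ~ fin en x -> inf en x.
Proof.
  intros Hf N. apply NNPP; intro Hn. apply Hf. exists N. intros m Hm.
  destruct (le_lt_dec N m); auto. exfalso; apply Hn; eauto.
Qed.

Lemma pick_ex {W} en (x : W) b : exists m, b <= m /\ (inf en x -> inc en x m).
Proof.
  destruct (classic (inf en x)) as [H|H].
  - destruct (H b) as [m [? ?]]; eauto.
  - exists b; split; auto; tauto.
Qed.
Definition pick {W} en (x : W) b := proj1_sig (constructive_indefinite_description _ (pick_ex en x b)).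
Lemma pick_ge {W} en (x : W) b : b <= pick en x b.
Proof. unfold pick; destruct (constructive_indefinite_description _ _); simpl; tauto. Qed.
Lemma pick_inc {W} en (x : W) b : inf en x -> inc en x (pick en x b).
Proof. unfold pick; destruct (constructive_indefinite_description _ _); simpl; tauto. Qed.

Definition hh t := t - Nat.sqrt t * Nat.sqrt t.
Definition xv {W} (en : nat -> W * W) t : W :=
  if Nat.even (hh t) then fst (en (Nat.div2 (hh t))) else snd (en (Nat.div2 (hh t))).

Fixpoint Bd {W} (en : nat -> W * W) t : nat :=
  match t with 0 => 0 | S t' => S (pick en (xv en t') (S (pick en (xv en t') (Bd en t')))) end.
Definition pp {W} (en : nat -> W * W) t := pick en (xv en t) (Bd en t).
Definition qq {W} (en : nat -> W * W) t := pick en (xv en t) (S (pp en t)).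

Lemma Bd_S {W} (en : nat -> W * W) t : Bd en (S t) = S (qq en t).
Proof. reflexivity. Qed.
Lemma Bd_pp {W} (en : nat -> W * W) t : Bd en t <= pp en t.
Proof. apply pick_ge. Qed.
Lemma pp_qq {W} (en : nat -> W * W) t : pp en t < qq en t.
Proof. unfold qq. pose proof (pick_ge en (xv en t) (S (pp en t))). lia. Qed.
Lemma Bd_mono {W} (en : nat -> W * W) t s : t < s -> Bd en (S t) <= Bd en s.
Proof.
  induction 1; auto. rewrite (Bd_S en m). pose proof (Bd_pp en m). pose proof (pp_qq en m). lia.
Qed.
Lemma Bd_ge {W} (en : nat -> W * W) t : t <= Bd en t.
Proof. induction t; simpl; auto. pose proof (Bd_pp en t). pose proof (pp_qq en t). unfold qq, pp in *. lia. Qed.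
Lemma interval_uniq {W} (en : nat -> W * W) t s m :
  Bd en t <= m < Bd en (S t) -> Bd en s <= m < Bd en (S s) -> t = s.
Proof.
  intros H1 H2. destruct (lt_eq_lt_dec t s) as [[Hl|]|Hl]; auto.
  - pose proof (Bd_mono en _ _ Hl); lia.
  - pose proof (Bd_mono en _ _ Hl); lia.
Qed.

Lemma hh_hit v N : exists t, N <= t /\ hh t = v.
Proof.
  set (M := N + v + 1). exists (M * M + v). split; [nia|].
  unfold hh. rewrite (Nat.sqrt_unique (M * M + v) M); [lia|]. split; [lia|]. simpl. nia.
Qed.
Lemma xv_hit_fst {W} (en : nat -> W * W) n N : exists t, N <= t /\ xv en t = fst (en n).
Proof.
  destruct (hh_hit (2 * n) N) as [t [Ht Hh]]. exists t; split; auto.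
  unfold xv; rewrite Hh, Nat.even_even, Nat.div2_double; auto.
Qed.
Lemma xv_hit_snd {W} (en : nat -> W * W) n N : exists t, N <= t /\ xv en t = snd (en n).
Proof.
  destruct (hh_hit (S (2 * n)) N) as [t [Ht Hh]]. exists t; split; auto.
  unfold xv; rewrite Hh, Nat.div2_succ_double.
  replace (S (2 * n)) with (2 * n + 1) by lia. rewrite Nat.even_odd; auto.
Qed.

Definition LG {W} (en : nat -> W * W) (A : nat -> nat -> Prop) :=
  forall n m, A n m <-> (n <> m /\ share_end (en n) (en m)).

Lemma A_irr {W} en A : @LG W en A -> forall n, ~ A n n.
Proof. intros H n Hn; apply H in Hn; tauto. Qed.
Lemma A_sym {W} en A : @LG W en A -> forall n m, A n m -> A m n.
Proof. intros H n m Hn; apply H in Hn; apply H. unfold share_end in *; intuition. Qed.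
Lemma A_inc {W} en A : @LG W en A -> forall n m, A n m -> inc en (fst (en n)) m \/ inc en (snd (en n)) m.
Proof. intros H n m Hn; apply H in Hn. unfold share_end, inc in *; intuition. Qed.
Lemma inc_A_fst {W} en A : @LG W en A -> forall n m, n <> m -> inc en (fst (en n)) m -> A n m.
Proof. intros H n m Hne Hi; apply H. unfold share_end, inc in *; intuition. Qed.
Lemma inc_A_snd {W} en A : @LG W en A -> forall n m, n <> m -> inc en (snd (en n)) m -> A n m.
Proof. intros H n m Hne Hi; apply H. unfold share_end, inc in *; intuition. Qed.

Definition admissible {W} (en : nat -> W * W) (c : nat -> bool) :=
  forall t, inf en (xv en t) -> c (qq en t) = negb (c (pp en t)).

Lemma unmatched {W} (en : nat -> W * W) n t : fin_ends en n -> inf en (xv en t) ->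
  n <> pp en t /\ n <> qq en t.
Proof.
  intros [H1 H2] Hi. pose proof (inf_not_fin _ _ Hi) as Hnf.
  split; intros ->; [pose proof (pick_inc en (xv en t) (Bd en t) Hi) as Hc
                    |pose proof (pick_inc en (xv en t) (S (pp en t)) Hi) as Hc];
  unfold pp, qq in *; destruct Hc as [Hc|Hc]; rewrite <- Hc in Hnf; tauto.
Qed.

Lemma admissible_ex {W} (en : nat -> W * W) : exists c, admissible en c.
Proof.
  exists (fun m => if excluded_middle_informative (exists t, inf en (xv en t) /\ m = qq en t) then true else false).
  intros t Ht.
  destruct (excluded_middle_informative (exists s, inf en (xv en s) /\ qq en t = qq en s)) as [_|Hn];
    [|exfalso; apply Hn; eauto].
  destruct (excluded_middle_informative (exists s, inf en (xv en s) /\ pp en t = qq en s)) as [[s [_ Hs]]|]; auto.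
  exfalso.
  assert (t = s).
  { apply (interval_uniq en t s (pp en t)).
    - pose proof (Bd_pp en t); pose proof (pp_qq en t); rewrite Bd_S; lia.
    - pose proof (Bd_pp en s); pose proof (pp_qq en s); rewrite Bd_S; lia. }
  subst s. pose proof (pp_qq en t). lia.
Qed.

Definition same (A : nat -> nat -> Prop) (c : nat -> bool) N i := sum N (fun j => ind (A i j /\ c j = c i)).
Definition opp (A : nat -> nat -> Prop) (c : nat -> bool) N i := sum N (fun j => ind (A i j /\ c j <> c i)).
Definition Gc A c N := sum N (fun i => same A c N i).
Definition Rc (A : nat -> nat -> Prop) (c : nat -> bool) N n :=
  sum N (fun i => sum N (fun j => ind (i <> n /\ j <> n /\ A i j /\ c j = c i))).

Lemma decomp A c N n : (forall i, ~ A i i) -> (forall i j, A i j -> A j i) -> n < N ->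
  Gc A c N = 2 * same A c N n + Rc A c N n.
Proof.
  intros Hirr Hsym Hn. unfold Gc, same, Rc.
  transitivity (sum N (fun i => sum N (fun j => ind (i <> n /\ j <> n /\ A i j /\ c j = c i)
       + ind (i = n /\ A i j /\ c j = c i) + ind (j = n /\ A i j /\ c j = c i)))).
  { apply sum_ext; intros i Hi; apply sum_ext; intros j Hj.
    unfold ind.
    destruct (excluded_middle_informative (A i j /\ c j = c i));
    destruct (excluded_middle_informative (i <> n /\ j <> n /\ A i j /\ c j = c i));
    destruct (excluded_middle_informative (i = n /\ A i j /\ c j = c i));
    destruct (excluded_middle_informative (j = n /\ A i j /\ c j = c i)); try tauto; try lia;
    try (destruct (Nat.eq_dec i n); destruct (Nat.eq_dec j n); subst; try tauto; firstorder; fail).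
  }
  rewrite (sum_ext N _ (fun i => sum N (fun j => ind (i <> n /\ j <> n /\ A i j /\ c j = c i))
          + sum N (fun j => ind (i = n /\ A i j /\ c j = c i)) + sum N (fun j => ind (j = n /\ A i j /\ c j = c i))))
    by (intros; rewrite !sum_plus; auto).
  rewrite !sum_plus.
  rewrite (sum_single N (fun i => sum N (fun j => ind (i = n /\ A i j /\ c j = c i))) n Hn).
  2:{ intros i Hi. apply sum_zero. intros j _. apply ind_false. tauto. }
  rewrite (sum_ext N (fun i => sum N (fun j => ind (j = n /\ A i j /\ c j = c i))) (fun i => ind (A n i /\ c i = c n))).
  2:{ intros i Hi. rewrite (sum_single N _ n Hn). 
      - apply ind_iff. split; [intros [_ [H1 H2]]; split; auto|intros [H1 H2]; split; auto].
      - intros j Hj; apply ind_false; tauto. }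
  rewrite (sum_ext N (fun j => ind (n = n /\ A n j /\ c j = c n)) (fun j => ind (A n j /\ c j = c n))).
  2:{ intros; apply ind_iff; tauto. }
  lia.
Qed.

Definition flip (c : nat -> bool) n := fun j => if Nat.eq_dec j n then negb (c n) else c j.

Lemma finite_step {W} (en : nat -> W * W) A N : LG en A ->
  exists c, admissible en c /\ forall n, n < N -> fin_ends en n -> same A c N n <= opp A c N n.
Proof.
  intros HL.
  destruct (min_exists (admissible en) (fun c => Gc A c N) (admissible_ex en)) as [c [Hc Hmin]].
  exists c; split; auto. intros n Hn Hf.
  assert (Had : admissible en (flip c n)).
  { intros t Ht. destruct (unmatched en n t Hf Ht). unfold flip.
    destruct (Nat.eq_dec (qq en t) n); [congruence|]. destruct (Nat.eq_dec (pp en t) n); [congruence|].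
    apply Hc; auto. }
  specialize (Hmin _ Had).
  rewrite (decomp A c N n (A_irr en A HL) (A_sym en A HL) Hn) in Hmin.
  rewrite (decomp A (flip c n) N n (A_irr en A HL) (A_sym en A HL) Hn) in Hmin.
  assert (HR : Rc A (flip c n) N n = Rc A c N n).
  { unfold Rc. apply sum_ext; intros i _; apply sum_ext; intros j _. apply ind_iff. unfold flip.
    destruct (Nat.eq_dec i n); destruct (Nat.eq_dec j n); tauto. }
  assert (HS : same A (flip c n) N n = opp A c N n).
  { unfold same, opp. apply sum_ext; intros j _. apply ind_iff. unfold flip.
    destruct (Nat.eq_dec j n) as [->|Hj]; destruct (Nat.eq_dec n n); try congruence.
    - pose proof (A_irr en A HL n); tauto.
    - destruct (c j), (c n); simpl; intuition congruence. }
  lia.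
Qed.

Lemma nb_ex {W} (en : nat -> W * W) A n : LG en A -> exists N, fin_ends en n -> forall m, A n m -> m < N.
Proof.
  intros HL. destruct (classic (fin_ends en n)) as [[[N1 H1] [N2 H2]]|H].
  - exists (N1 + N2). intros _ m Hm. destruct (A_inc en A HL n m Hm) as [Hi|Hi];
    [specialize (H1 m Hi)|specialize (H2 m Hi)]; lia.
  - exists 0; tauto.
Qed.

Definition Pk {W} (en : nat -> W * W) A nb k (c : nat -> bool) :=
  (fin_ends en k -> same A c (nb k) k <= opp A c (nb k) k) /\
  (inf en (xv en k) -> c (qq en k) = negb (c (pp en k))).

Lemma global {W} (en : nat -> W * W) A : LG en A ->
  exists c : nat -> bool, forall n, exists phi : {m | A n m /\ c m = c n} -> {m | A n m /\ c m <> c n},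
     forall x y, phi x = phi y -> x = y.
Proof.
  intros HL.
  set (nb := fun n => proj1_sig (constructive_indefinite_description (fun N => fin_ends en n -> forall m, A n m -> m < N) (nb_ex en A n HL))).
  assert (Hnb : forall n, fin_ends en n -> forall m, A n m -> m < nb n).
  { intros n; unfold nb; destruct (constructive_indefinite_description _ _); auto. }
  set (b := fun k => nb k + S k + S (qq en k)).
  destruct (compactness (Pk en A nb) b) as [c Hc].
  - intros k c c' Hag [P1 P2]. pose proof (pp_qq en k) as Hpq.
    assert (Hk : c k = c' k) by (apply Hag; unfold b; lia).
    split.
    + intros Hf. specialize (P1 Hf). unfold same, opp in *.
      rewrite (sum_ext _ (fun j => ind (A k j /\ c' j = c' k)) (fun j => ind (A k j /\ c j = c k))).
      rewrite (sum_ext _ (fun j => ind (A k j /\ c' j <> c' k)) (fun j => ind (A k j /\ c j <> c k))); auto.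
      all: intros j Hj; apply ind_iff; rewrite <- Hk, (Hag j) by (unfold b; lia); tauto.
    + intros Hi. rewrite <- !Hag by (unfold b; lia). auto.
  - intros K. destruct (finite_step en A (sum K b) HL) as [c [Had Hs]].
    exists c. intros k Hk. pose proof (sum_elem K b k Hk) as Hbk. unfold b in Hbk at 1.
    split; [|apply Had].
    intros Hf. specialize (Hs k ltac:(lia) Hf). unfold same, opp in *.
    rewrite (sum_trunc (nb k) (sum K b)) in Hs by (lia || (intros i Hi; apply ind_false; intros [Ha _]; specialize (Hnb k Hf i Ha); lia)).
    rewrite (sum_trunc (nb k) (sum K b)) in Hs by (lia || (intros i Hi; apply ind_false; intros [Ha _]; specialize (Hnb k Hf i Ha); lia)).
    auto.
  - exists c. intros n.
    destruct (classic (fin_ends en n)) as [Hf|Hnf].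
    + apply (inj_fin _ _ (nb n)).
      * intros m [Hm _]; apply Hnb; auto.
      * destruct (Hc n) as [P1 _]. specialize (P1 Hf). unfold same, opp in P1. exact P1.
    + apply inj_inf. intros N.
      assert (Hx : exists t, N + S n <= t /\ inf en (xv en t) /\
                 (xv en t = fst (en n) \/ xv en t = snd (en n))).
      { unfold fin_ends in Hnf. destruct (classic (fin en (fst (en n)))) as [Hf1|Hf1].
        - destruct (xv_hit_snd en n (N + S n)) as [t [Ht Hxt]]. exists t. rewrite Hxt.
          split; auto. split; [apply not_fin_inf; tauto|auto].
        - destruct (xv_hit_fst en n (N + S n)) as [t [Ht Hxt]]. exists t. rewrite Hxt.
          split; auto. split; [apply not_fin_inf; tauto|auto]. }
      destruct Hx as [t [Ht [Hi Hxt]]].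
      pose proof (Bd_ge en t). pose proof (Bd_pp en t). pose proof (pp_qq en t).
      pose proof (pick_inc en (xv en t) (Bd en t) Hi) as Hp.
      pose proof (pick_inc en (xv en t) (S (pp en t)) Hi) as Hq.
      fold (pp en t) in Hp. fold (qq en t) in Hq.
      destruct (Hc t) as [_ P2]. specialize (P2 Hi).
      assert (HA : forall m, n < m -> inc en (xv en t) m -> A n m).
      { intros m Hm Hinc. destruct Hxt as [Hxt|Hxt]; rewrite Hxt in Hinc;
        [apply (inc_A_fst en A HL)|apply (inc_A_snd en A HL)]; auto; lia. }
      destruct (Bool.bool_dec (c (pp en t)) (c n)) as [He|He].
      * exists (qq en t). split; [lia|split; [apply HA; auto; lia|]]. rewrite P2, He. destruct (c n); discriminate.
      * exists (pp en t). split; [lia|split; [apply HA; auto; lia|auto]].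
Qed.

Theorem mainTheorem5 (V : Type) (adj : V -> V -> Prop) :
  simple_graph adj -> countably_infinite V -> is_line_graph adj ->
  exists c : V -> bool, majority_2_colouring adj c.
Proof.
  intros _ [f [finj fsurj]] [W [adjH [ends [_ [_ [_ [_ Hadj]]]]]]].
  set (en := fun n => ends (f n)).
  set (A := fun n m => adj (f n) (f m)).
  assert (HL : LG en A).
  { intros n m. unfold A, en. rewrite Hadj. split; intros [H1 H2]; split; try exact H2.
    - intros ->; auto.
    - intros He; apply H1; auto. }
  destruct (global en A HL) as [c Hc].
  set (g := fun v => proj1_sig (constructive_indefinite_description _ (fsurj v))).
  assert (Hfg : forall v, f (g v) = v).
  { intros v; unfold g; destruct (constructive_indefinite_description _ _); auto. }
  assert (Hgf : forall m, g (f m) = m) by (intros m; apply finj; rewrite Hfg; auto).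
  exists (fun v => c (g v)). intros v.
  destruct (Hc (g v)) as [phi Hphi].
  assert (H1 : forall w, nbhd adj v w /\ c (g w) = c (g v) -> A (g v) (g w) /\ c (g w) = c (g v)).
  { intros w [Ha Hc']; split; auto. unfold A; rewrite !Hfg; auto. }
  assert (H2 : forall m, A (g v) m /\ c m <> c (g v) -> nbhd adj v (f m) /\ c (g (f m)) <> c (g v)).
  { intros m [Ha Hc']; unfold A in Ha; rewrite Hfg in Ha; split; auto. rewrite Hgf; auto. }
  exists (fun x => exist _ (f (proj1_sig (phi (exist _ (g (proj1_sig x)) (H1 _ (proj2_sig x))))))
                     (H2 _ (proj2_sig (phi (exist _ (g (proj1_sig x)) (H1 _ (proj2_sig x))))))).
  intros x y Hxy. apply (f_equal (@proj1_sig _ _)) in Hxy. simpl in Hxy.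
  apply finj in Hxy. apply sig_eq in Hxy. apply Hphi in Hxy.
  apply (f_equal (@proj1_sig _ _)) in Hxy. simpl in Hxy.
  apply sig_eq. rewrite <- (Hfg (proj1_sig x)), <- (Hfg (proj1_sig y)), Hxy. auto.
Qed.
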